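(* For each $\alpha\in(0,\pi/2)$ and $\beta\in[0,\alpha]$, the competitive ratio of the $\beta$-Hedge algorithm with parameter $\beta$ equals $$\max_{r\in[\max\{0,-\cos(2\alpha)\},\,1]} f_1(\alpha,\beta,r).$$
   Context: Online drone coverage on a line. A drone has a fixed half angle-of-view $\alpha\in(0,\pi/2)$. A drone at a point $T=(t_x,t_y)$ with $t_y\ge 0$ covers the segment $[t_x-t_y\tan\alpha,\ t_x+t_y\tan\alpha]$ of the $x$-axis. For a point $X=(x,0)$ its feasibility cone is $\mathrm{FC}(X)=\{(u,v): v\ge 0,\ |u-x|\le v\tan\alpha\}$, and the feasibility cone of a finite set of points is the intersection of their cones. An input is a sequence $X_0=(0,0),X_1,\dots,X_n$ ($n\ge1$) of points $X_i=(x_i,0)$ revealed one at a time. A solution is a sequence of positions $P_0=(0,0),P_1,\dots,P_n$ with $P_i\in\mathrm{FC}(X_0,\dots,X_i)$; its cost is $\sum_i|P_iP_{i+1}|$. $\mathrm{OPT}(\mathbf X;\alpha)$ is the minimum cost of a solution (input known in advance). A request $X_{i+1}$ is redundant if $x_{i+1}\in[\min_{j\le i}x_j,\max_{j\le i}x_j]$. An input is good if it has no redundant requests, $\min_j x_j=-1$ and $\max_j x_j\in[0,1]$. The competitive ratio of an algorithm is the supremum over good inputs of its cost divided by $\mathrm{OPT}$. The $\beta$-Hedge algorithm with parameter $\beta\in[0,\alpha]$: if $P_{i-1}\in\mathrm{FC}(X_0,\dots,X_i)$ then $P_i=P_{i-1}$; otherwise the drone moves from $P_{i-1}$ along the ray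 with direction $(\operatorname{sgn}(x_i)\sin\beta,\cos\beta)$ (angle $\beta$ from the upward vertical, tilted toward the new request), and $P_i$ is the first point of this ray in $\mathrm{FC}(X_0,\dots,X_i)$. $$f_1(\alpha,\beta,r)=\frac{2\sin\alpha}{\cos\beta(\tan\alpha+\tan\beta)}\cdot\frac{1+\frac{2\tan\beta}{\tan\alpha+\tan\beta}\,r}{\sqrt{1+r^2+2\cos(2\alpha)\,r}}.$$ *)

(* Defs.v *)
From Stdlib Require Import Reals Lra.
Open Scope R_scope.

Definition pt := (R * R)%type.

Definition dist (p q : pt) : R :=
  sqrt ((fst p - fst q) ^ 2 + (snd p - snd q) ^ 2).

(* An input is given by x : nat -> R together with its length n;
   the requested points are X_j = (x j, 0) for j = 0..n (only these values matter). *)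

Definition in_FC (a : R) (x : nat -> R) (i : nat) (p : pt) : Prop :=
  0 <= snd p /\ forall j, (j <= i)%nat -> Rabs (fst p - x j) <= snd p * tan a.

Fixpoint cost (P : nat -> pt) (n : nat) : R :=
  match n with
  | O => 0
  | S m => cost P m + dist (P m) (P (S m))
  end.

Definition solution (a : R) (x : nat -> R) (n : nat) (P : nat -> pt) : Prop :=
  P 0%nat = (0, 0) /\ forall i, (i <= n)%nat -> in_FC a x i (P i).

Definition is_OPT (a : R) (x : nat -> R) (n : nat) (o : R) : Prop :=
  (forall P, solution a x n P -> o <= cost P n) /\
  (forall m, (forall P, solution a x n P -> m <= cost P n) -> m <= o).

Definition good (x : nat -> R) (n : nat) : Prop :=
  (1 <= n)%nat /\ x 0%nat = 0 /\
  (* no redundant request: x_{i+1} not in [min_{j<=i} x_j, max_{j<=i} x_j] *)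
  (forall i, (i < n)%nat ->
     ~ ((exists j, (j <= i)%nat /\ x j <= x (S i)) /\
        (exists j, (j <= i)%nat /\ x (S i) <= x j))) /\
  ((exists j, (j <= n)%nat /\ x j = -1) /\ (forall j, (j <= n)%nat -> -1 <= x j)) /\
  ((exists j, (j <= n)%nat /\ 0 <= x j) /\ (forall j, (j <= n)%nat -> x j <= 1)).

Definition sgn (r : R) : R :=
  if Rlt_dec 0 r then 1 else if Rlt_dec r 0 then -1 else 0.

Definition hedge_step (a b : R) (x : nat -> R) (i : nat) (p q : pt) : Prop :=
  let d : pt := (sgn (x (S i)) * sin b, cos b) in
  let ray (t : R) : pt := (fst p + t * fst d, snd p + t * snd d) in
  (in_FC a x (S i) p -> q = p) /\
  (~ in_FC a x (S i) p ->
     exists t, 0 <= t /\ q = ray t /\ in_FC a x (S i) q /\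
       forall s, 0 <= s < t -> ~ in_FC a x (S i) (ray s)).

Definition hedge_run (a b : R) (x : nat -> R) (n : nat) (P : nat -> pt) : Prop :=
  P 0%nat = (0, 0) /\ forall i, (i < n)%nat -> hedge_step a b x i (P i) (P (S i)).

(* The set of ratios ALG/OPT over good inputs; the competitive ratio is its supremum. *)
Definition hedge_ratios (a b : R) (q : R) : Prop :=
  exists x n P o, good x n /\ hedge_run a b x n P /\ is_OPT a x n o /\
    q = cost P n / o.

Definition f1 (a b r : R) : R :=
  2 * sin a / (cos b * (tan a + tan b)) *
  ((1 + 2 * tan b / (tan a + tan b) * r) / sqrt (1 + r ^ 2 + 2 * cos (2 * a) * r)).

(* Main.v *)
From Stdlib Require Import Reals Lra Lia Psatz Classical.
Require Import Defs.
Open Scope R_scope.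

Lemma Rabs_le_iff z w : Rabs z <= w <-> -w <= z <= w.
Proof. unfold Rabs; destruct (Rcase_abs z); split; intros; lra. Qed.

Definition TH a b := 0 < tan a /\ 0 <= tan b /\ tan b <= tan a /\ 0 < cos b /\
  sin b = tan b * cos b /\ sin b ^2 + cos b ^2 = 1 /\ 0 < sin a /\ 0 < cos a /\
  tan a = sin a / cos a /\ sin a ^2 + cos a ^2 = 1 /\ cos (2*a) = cos a ^2 - sin a ^2.

Lemma TH_ok a b : 0 < a < PI / 2 -> 0 <= b <= a -> TH a b.
Proof.
  intros ha hb.
  assert (Hsa : 0 < sin a) by (apply sin_gt_0; lra).
  assert (Hca : 0 < cos a) by (apply cos_gt_0; lra).
  assert (Hsb : 0 <= sin b) by (apply sin_ge_0; lra).
  assert (Hcb : 0 < cos b) by (apply cos_gt_0; lra).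
  assert (Hsab : 0 <= sin (a - b)) by (apply sin_ge_0; lra).
  rewrite sin_minus in Hsab.
  assert (Ha2 := sin2_cos2 a). assert (Hb2 := sin2_cos2 b). unfold Rsqr in *.
  unfold TH, tan.
  split; [apply Rdiv_lt_0_compat; lra|].
  split; [unfold Rdiv; apply Rmult_le_pos; [lra|left; apply Rinv_0_lt_compat; lra]|].
  split.
  { apply Rmult_le_reg_r with (cos a * cos b); [nra|].
    replace (sin b / cos b * (cos a * cos b)) with (sin b * cos a) by (field; lra).
    replace (sin a / cos a * (cos a * cos b)) with (sin a * cos b) by (field; lra). lra. }
  split; [lra|]. split; [field; lra|]. split; [lra|]. split; [lra|]. split; [lra|].
  split; [reflexivity|]. split; [lra|]. rewrite cos_2a. ring.
Qed.

Definition s0R a b x i (p : pt) :=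
  Rmax 0 ((x (S i) - fst p - snd p * tan a) / (cos b * (tan a + tan b))).
Definition s0L a b x i (p : pt) :=
  Rmax 0 ((fst p - x (S i) - snd p * tan a) / (cos b * (tan a + tan b))).

Lemma fc_right a b x i u v s :
  TH a b -> in_FC a x i (u, v) -> (forall j, (j <= i)%nat -> x j < x (S i)) -> 0 <= s ->
  (in_FC a x (S i) (u + s * (1 * sin b), v + s * cos b) <->
   x (S i) - u - v * tan a <= s * (cos b * (tan a + tan b))).
Proof.
  intros [Hta [Htb0 [Htb [Hcb [Hsb _]]]]] [Hv HF] Hlt Hs. simpl in *.
  assert (E1 : s * (cos b * (tan a + tan b)) = s * (1 * sin b) + s * cos b * tan a)
    by (rewrite Hsb; ring).
  assert (E2 : s * (1 * sin b) <= s * cos b * tan a).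
  { rewrite Hsb. assert (0 <= s * cos b) by nra. nra. }
  rewrite E1. split.
  - intros [_ H]. specialize (H (S i) (le_n _)). simpl in H. apply Rabs_le_iff in H. nra.
  - intros H. split; simpl.
    + nra.
    + intros j Hj. apply Rabs_le_iff.
      assert (H0 := HF 0%nat (Nat.le_0_l _)). apply Rabs_le_iff in H0.
      assert (H0' := Hlt 0%nat (Nat.le_0_l _)).
      apply Nat.le_succ_r in Hj. destruct Hj as [Hj|Hj].
      * assert (Hj1 := HF j Hj). apply Rabs_le_iff in Hj1. assert (HH := Hlt j Hj). nra.
      * subst j. nra.
Qed.

Lemma fc_left a b x i u v s :
  TH a b -> in_FC a x i (u, v) -> (forall j, (j <= i)%nat -> x (S i) < x j) -> 0 <= s ->
  (in_FC a x (S i) (u + s * (-1 * sin b), v + s * cos b) <->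
   u - x (S i) - v * tan a <= s * (cos b * (tan a + tan b))).
Proof.
  intros [Hta [Htb0 [Htb [Hcb [Hsb _]]]]] [Hv HF] Hlt Hs. simpl in *.
  assert (E1 : s * (cos b * (tan a + tan b)) = s * (1 * sin b) + s * cos b * tan a)
    by (rewrite Hsb; ring).
  assert (E2 : s * (1 * sin b) <= s * cos b * tan a).
  { rewrite Hsb. assert (0 <= s * cos b) by nra. nra. }
  rewrite E1. split.
  - intros [_ H]. specialize (H (S i) (le_n _)). simpl in H. apply Rabs_le_iff in H. nra.
  - intros H. split; simpl.
    + nra.
    + intros j Hj. apply Rabs_le_iff.
      assert (H0 := HF 0%nat (Nat.le_0_l _)). apply Rabs_le_iff in H0.
      assert (H0' := Hlt 0%nat (Nat.le_0_l _)).
      apply Nat.le_succ_r in Hj. destruct Hj as [Hj|Hj].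
      * assert (Hj1 := HF j Hj). apply Rabs_le_iff in Hj1. assert (HH := Hlt j Hj). nra.
      * subst j. nra.
Qed.

Lemma sgn_pos r : 0 < r -> sgn r = 1.
Proof. intros; unfold sgn; destruct (Rlt_dec 0 r); lra. Qed.
Lemma sgn_neg r : r < 0 -> sgn r = -1.
Proof. intros; unfold sgn; destruct (Rlt_dec 0 r); [lra|]; destruct (Rlt_dec r 0); lra. Qed.

Lemma step_right a b x i u v q :
  TH a b -> in_FC a x i (u, v) -> (forall j, (j <= i)%nat -> x j < x (S i)) -> 0 < x (S i) ->
  (hedge_step a b x i (u, v) q <->
   q = (u + s0R a b x i (u, v) * (1 * sin b), v + s0R a b x i (u, v) * cos b)).
Proof.
  intros HT Hin Hlt Hpos.
  assert (HK : 0 < cos b * (tan a + tan b)).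
  { destruct HT as [Hta [Htb0 [_ [Hcb _]]]]. apply Rmult_lt_0_compat; lra. }
  set (K := cos b * (tan a + tan b)) in *.
  set (g0 := x (S i) - u - v * tan a).
  assert (Hfc := fun s => fc_right a b x i u v s HT Hin Hlt).
  fold K g0 in Hfc.
  assert (Hp : forall w : R, (u + 0 * w, v + 0 * cos b) = (u, v)).
  { intros; f_equal; ring. }
  unfold hedge_step, s0R; cbv zeta; simpl. rewrite (sgn_pos _ Hpos). fold K g0.
  split.
  - intros [H1 H2]. destruct (classic (in_FC a x (S i) (u, v))) as [Hi|Hn].
    + rewrite (H1 Hi). assert (g0 <= 0).
      { rewrite <- (Hp (1 * sin b)) in Hi. apply Hfc in Hi; lra. }
      rewrite Rmax_left. 2: { unfold Rdiv. assert (0 < / K) by (apply Rinv_0_lt_compat; lra). nra. }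
      rewrite Hp; auto.
    + destruct (H2 Hn) as [t [Ht [Hq [Hqin Hmin]]]].
      assert (Hg : 0 < g0).
      { destruct (Rlt_le_dec 0 g0) as [?|Hg]; auto. exfalso; apply Hn.
        rewrite <- (Hp (1 * sin b)). apply Hfc; lra. }
      rewrite Rmax_right. 2: { unfold Rdiv. assert (0 < / K) by (apply Rinv_0_lt_compat; lra). nra. }
      rewrite Hq in Hqin. apply Hfc in Hqin; auto.
      assert (t = g0 / K).
      { destruct (Rlt_le_dec (g0 / K) t) as [Hl|Hl].
        - exfalso. apply (Hmin (g0 / K)).
          + split; auto. unfold Rdiv. assert (0 < / K) by (apply Rinv_0_lt_compat; lra). nra.
          + apply Hfc. unfold Rdiv. assert (0 < / K) by (apply Rinv_0_lt_compat; lra). nra.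
            right. field. lra.
        - apply Rle_antisym; auto. apply Rmult_le_reg_r with K; auto.
          replace (g0 / K * K) with g0 by (field; lra). lra. }
      subst t. exact Hq.
  - intros Hq. split.
    + intros Hi. assert (g0 <= 0).
      { rewrite <- (Hp (1 * sin b)) in Hi. apply Hfc in Hi; lra. }
      rewrite Rmax_left in Hq. 2: { unfold Rdiv. assert (0 < / K) by (apply Rinv_0_lt_compat; lra). nra. }
      rewrite Hp in Hq; auto.
    + intros Hn. assert (Hg : 0 < g0).
      { destruct (Rlt_le_dec 0 g0) as [?|Hg]; auto. exfalso; apply Hn.
        rewrite <- (Hp (1 * sin b)). apply Hfc; lra. }
      rewrite Rmax_right in Hq. 2: { unfold Rdiv. assert (0 < / K) by (apply Rinv_0_lt_compat; lra). nra. }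
      assert (0 < g0 / K) by (unfold Rdiv; assert (0 < / K) by (apply Rinv_0_lt_compat; lra); nra).
      exists (g0 / K). split; [lra|]. split; [exact Hq|]. split.
      * rewrite Hq. apply Hfc; [lra|]. right; field; lra.
      * intros s [Hs0 Hs1] Hs. apply Hfc in Hs; auto.
        apply (Rmult_lt_compat_r K) in Hs1; auto.
        replace (g0 / K * K) with g0 in Hs1 by (field; lra). lra.
Qed.
Lemma step_left a b x i u v q :
  TH a b -> in_FC a x i (u, v) -> (forall j, (j <= i)%nat -> x (S i) < x j) -> x (S i) < 0 ->
  (hedge_step a b x i (u, v) q <->
   q = (u + s0L a b x i (u, v) * (-1 * sin b), v + s0L a b x i (u, v) * cos b)).
Proof.
  intros HT Hin Hlt Hpos.
  assert (HK : 0 < cos b * (tan a + tan b)).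
  { destruct HT as [Hta [Htb0 [_ [Hcb _]]]]. apply Rmult_lt_0_compat; lra. }
  set (K := cos b * (tan a + tan b)) in *.
  set (g0 := u - x (S i) - v * tan a).
  assert (Hfc := fun s => fc_left a b x i u v s HT Hin Hlt).
  fold K g0 in Hfc.
  assert (Hp : forall w : R, (u + 0 * w, v + 0 * cos b) = (u, v)).
  { intros; f_equal; ring. }
  unfold hedge_step, s0L; cbv zeta; simpl. rewrite (sgn_neg _ Hpos). fold K g0.
  split.
  - intros [H1 H2]. destruct (classic (in_FC a x (S i) (u, v))) as [Hi|Hn].
    + rewrite (H1 Hi). assert (g0 <= 0).
      { rewrite <- (Hp (-1 * sin b)) in Hi. apply Hfc in Hi; lra. }
      rewrite Rmax_left. 2: { unfold Rdiv. assert (0 < / K) by (apply Rinv_0_lt_compat; lra). nra. }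
      rewrite Hp; auto.
    + destruct (H2 Hn) as [t [Ht [Hq [Hqin Hmin]]]].
      assert (Hg : 0 < g0).
      { destruct (Rlt_le_dec 0 g0) as [?|Hg]; auto. exfalso; apply Hn.
        rewrite <- (Hp (-1 * sin b)). apply Hfc; lra. }
      rewrite Rmax_right. 2: { unfold Rdiv. assert (0 < / K) by (apply Rinv_0_lt_compat; lra). nra. }
      rewrite Hq in Hqin. apply Hfc in Hqin; auto.
      assert (t = g0 / K).
      { destruct (Rlt_le_dec (g0 / K) t) as [Hl|Hl].
        - exfalso. apply (Hmin (g0 / K)).
          + split; auto. unfold Rdiv. assert (0 < / K) by (apply Rinv_0_lt_compat; lra). nra.
          + apply Hfc. unfold Rdiv. assert (0 < / K) by (apply Rinv_0_lt_compat; lra). nra.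
            right. field. lra.
        - apply Rle_antisym; auto. apply Rmult_le_reg_r with K; auto.
          replace (g0 / K * K) with g0 by (field; lra). lra. }
      subst t. exact Hq.
  - intros Hq. split.
    + intros Hi. assert (g0 <= 0).
      { rewrite <- (Hp (-1 * sin b)) in Hi. apply Hfc in Hi; lra. }
      rewrite Rmax_left in Hq. 2: { unfold Rdiv. assert (0 < / K) by (apply Rinv_0_lt_compat; lra). nra. }
      rewrite Hp in Hq; auto.
    + intros Hn. assert (Hg : 0 < g0).
      { destruct (Rlt_le_dec 0 g0) as [?|Hg]; auto. exfalso; apply Hn.
        rewrite <- (Hp (-1 * sin b)). apply Hfc; lra. }
      rewrite Rmax_right in Hq. 2: { unfold Rdiv. assert (0 < / K) by (apply Rinv_0_lt_compat; lra). nra. }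
      assert (0 < g0 / K) by (unfold Rdiv; assert (0 < / K) by (apply Rinv_0_lt_compat; lra); nra).
      exists (g0 / K). split; [lra|]. split; [exact Hq|]. split.
      * rewrite Hq. apply Hfc; [lra|]. right; field; lra.
      * intros s [Hs0 Hs1] Hs. apply Hfc in Hs; auto.
        apply (Rmult_lt_compat_r K) in Hs1; auto.
        replace (g0 / K * K) with g0 in Hs1 by (field; lra). lra.
Qed.

Lemma hedge_step_fc a b x i p q : hedge_step a b x i p q -> in_FC a x (S i) q.
Proof.
  unfold hedge_step; cbv zeta. intros [H1 H2].
  destruct (classic (in_FC a x (S i) p)) as [Hi|Hn].
  - rewrite (H1 Hi); auto.
  - destruct (H2 Hn) as [t [_ [Hq [Hqin _]]]]. exact Hqin.
Qed.

Lemma dist_ray u v s w c : 0 <= s -> w ^ 2 + c ^ 2 = 1 ->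
  Defs.dist (u, v) (u + s * w, v + s * c) = s.
Proof.
  intros Hs H. unfold Defs.dist; cbn [fst snd].
  replace ((u - (u + s * w)) ^ 2 + (v - (v + s * c)) ^ 2) with (s ^ 2 * (w ^ 2 + c ^ 2)) by ring.
  rewrite H, Rmult_1_r. apply sqrt_pow2; auto.
Qed.

Lemma good_dir x n i : good x n -> (i < n)%nat ->
  (forall j, (j <= i)%nat -> x j < x (S i)) \/ (forall j, (j <= i)%nat -> x (S i) < x j).
Proof.
  intros [_ [_ [Hnr _]]] Hi. specialize (Hnr i Hi).
  destruct (classic (exists j, (j <= i)%nat /\ x (S i) <= x j)) as [H|H].
  - right. intros j Hj. apply Rnot_le_lt. intros Hc. apply Hnr. split; eauto.
  - left. intros j Hj. apply Rnot_le_lt. intros Hc. apply H; eauto.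
Qed.

Lemma s0_facts g0 K : 0 < K -> 0 <= Rmax 0 (g0 / K) /\
  (Rmax 0 (g0 / K) = 0 \/ Rmax 0 (g0 / K) * K = g0).
Proof.
  intros HK. split; [apply Rmax_l|].
  destruct (Rle_dec (g0 / K) 0) as [H|H].
  - left. apply Rmax_left; auto.
  - right. rewrite Rmax_right by lra. field. lra.
Qed.

Definition Inv a b x (P : nat -> pt) i :=
  let k := 2 * tan b / (tan a + tan b) in
  in_FC a x i (P i) /\ cost P i * cos b = snd (P i) /\
  0 <= snd (P i) * tan b - fst (P i) /\ 0 <= snd (P i) * tan b + fst (P i) /\
  forall l R, (forall j, (j <= i)%nat -> -l <= x j <= R) ->
    snd (P i) * tan b - fst (P i) <= k * l /\ snd (P i) * tan b + fst (P i) <= k * R /\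
    (tan a + tan b) * snd (P i) <= Rmax (R + k * l) (l + k * R).

Lemma run_inv a b x n P : TH a b -> good x n -> hedge_run a b x n P ->
  forall i, (i <= n)%nat -> Inv a b x P i.
Proof.
  intros HT Hg [HP0 Hst].
  assert (HT' := HT).
  destruct HT' as [Hta [Htb0 [Htb [Hcb [Hsb [Hb2 _]]]]]].
  assert (HT0 : 0 < tan a + tan b) by lra.
  assert (Hk : (2 * tan b / (tan a + tan b)) * (tan a + tan b) = 2 * tan b) by (field; lra).
  assert (Hk0 : 0 <= 2 * tan b / (tan a + tan b)).
  { unfold Rdiv. assert (0 < / (tan a + tan b)) by (apply Rinv_0_lt_compat; lra). nra. }
  assert (Hk1 : 2 * tan b / (tan a + tan b) <= 1).
  { apply Rmult_le_reg_r with (tan a + tan b); auto. rewrite Hk. lra. }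
  assert (Hx0 : x 0%nat = 0) by apply Hg.
  induction i as [|i IH]; intros Hi.
  - unfold Inv; cbv zeta. rewrite HP0; simpl. split; [|split; [ring|split; [lra|split; [lra|]]]].
    + unfold in_FC; simpl; split; [lra|]. intros j Hj. assert (j = 0%nat) by lia. subst. rewrite Hx0.
      rewrite Rminus_0_r, Rabs_R0. lra.
    + intros l R HlR. destruct (HlR 0%nat (le_n _)) as [Hl HR]. rewrite Hx0 in *.
      split; [nra|]. split; [nra|]. rewrite Rmult_0_r. apply Rle_trans with (R + 2 * tan b / (tan a + tan b) * l); [nra|apply Rmax_l].
  - assert (Hin : (i < n)%nat) by lia. specialize (IH ltac:(lia)).
    set (k := 2 * tan b / (tan a + tan b)) in *.
    unfold Inv in IH |- *; cbv zeta in IH |- *. fold k in IH |- *.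
    destruct IH as [HF [Hc [HD [HE HB]]]].
    assert (Hs := Hst i Hin).
    assert (HFS := hedge_step_fc _ _ _ _ _ _ Hs).
    destruct (P i) as [u v] eqn:EPi. simpl in *.
    set (K := cos b * (tan a + tan b)) in *.
    assert (HK : 0 < K) by (unfold K; apply Rmult_lt_0_compat; lra).
    destruct (good_dir x n i Hg Hin) as [Hd|Hd].
    + assert (Hpos : 0 < x (S i)) by (rewrite <- Hx0; apply Hd; lia).
      apply (step_right a b x i u v _ HT HF Hd Hpos) in Hs.
      unfold s0R in Hs; simpl in Hs. fold K in Hs.
      destruct (s0_facts (x (S i) - u - v * tan a) K HK) as [Hs0 Hs1].
      set (s := Rmax 0 ((x (S i) - u - v * tan a) / K)) in *.
      rewrite Hs in HFS |- *. simpl. split; [exact HFS|].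
      split. { rewrite EPi, dist_ray by (try lra; simpl in *; nra). nra. }
      assert (ED : (v + s * cos b) * tan b - (u + s * (1 * sin b)) = v * tan b - u)
        by (rewrite Hsb; ring).
      assert (EE : (v + s * cos b) * tan b + (u + s * (1 * sin b)) = v * tan b + u + 2 * s * sin b)
        by (rewrite Hsb; ring).
      assert (0 <= s * sin b) by (rewrite Hsb; assert (0 <= s * cos b) by nra; nra).
      rewrite ED, EE. split; [lra|]. split; [lra|].
      intros l R HlR.
      destruct (HB l R (fun j Hj => HlR j ltac:(lia))) as [B1 [B2 B3]].
      destruct (HlR (S i) (le_n _)) as [_ HxR].
      destruct Hs1 as [Z|Z].
      * rewrite Z in *. split; [lra|]. split; [lra|]. nra.
      * assert (ET : (tan a + tan b) * (v + s * cos b) = x (S i) + (v * tan b - u)).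
        { replace ((tan a + tan b) * (v + s * cos b)) with ((tan a + tan b) * v + s * K) by (unfold K; ring).
          rewrite Z. ring. }
        assert (EE2 : v * tan b + u + 2 * s * sin b = k * (x (S i) + (v * tan b - u)) - (v * tan b - u)).
        { rewrite <- ET. replace (k * ((tan a + tan b) * (v + s * cos b))) with ((k * (tan a + tan b)) * (v + s * cos b)) by ring.
          rewrite Hk, Hsb. ring. }
        split; [lra|]. split.
        { rewrite EE2. nra. }
        rewrite ET. apply Rle_trans with (R + k * l); [lra|apply Rmax_l].
    + assert (Hneg : x (S i) < 0) by (rewrite <- Hx0; apply Hd; lia).
      apply (step_left a b x i u v _ HT HF Hd Hneg) in Hs.
      unfold s0L in Hs; simpl in Hs. fold K in Hs.
      destruct (s0_facts (u - x (S i) - v * tan a) K HK) as [Hs0 Hs1].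
      set (s := Rmax 0 ((u - x (S i) - v * tan a) / K)) in *.
      rewrite Hs in HFS |- *. simpl. split; [exact HFS|].
      split. { rewrite EPi, dist_ray by (try lra; simpl in *; nra). nra. }
      assert (ED : (v + s * cos b) * tan b + (u + s * (-1 * sin b)) = v * tan b + u)
        by (rewrite Hsb; ring).
      assert (EE : (v + s * cos b) * tan b - (u + s * (-1 * sin b)) = v * tan b - u + 2 * s * sin b)
        by (rewrite Hsb; ring).
      assert (0 <= s * sin b) by (rewrite Hsb; assert (0 <= s * cos b) by nra; nra).
      rewrite ED, EE. split; [lra|]. split; [lra|].
      intros l R HlR.
      destruct (HB l R (fun j Hj => HlR j ltac:(lia))) as [B1 [B2 B3]].
      destruct (HlR (S i) (le_n _)) as [Hxl _].
      destruct Hs1 as [Z|Z].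
      * rewrite Z in *. split; [lra|]. split; [lra|]. nra.
      * assert (ET : (tan a + tan b) * (v + s * cos b) = - x (S i) + (v * tan b + u)).
        { replace ((tan a + tan b) * (v + s * cos b)) with ((tan a + tan b) * v + s * K) by (unfold K; ring).
          rewrite Z. ring. }
        assert (EE2 : v * tan b - u + 2 * s * sin b = k * (- x (S i) + (v * tan b + u)) - (v * tan b + u)).
        { rewrite <- ET. replace (k * ((tan a + tan b) * (v + s * cos b))) with ((k * (tan a + tan b)) * (v + s * cos b)) by ring.
          rewrite Hk, Hsb. ring. }
        split.
        { rewrite EE2. nra. }
        split; [lra|].
        rewrite ET. apply Rle_trans with (l + k * R); [lra|apply Rmax_r].
Qed.

Lemma dist_ge_lin p q w1 w2 : w1 ^ 2 + w2 ^ 2 <= 1 ->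
  w1 * (fst q - fst p) + w2 * (snd q - snd p) <= dist p q.
Proof.
  intros Hw. unfold dist.
  set (d1 := fst q - fst p). set (d2 := snd q - snd p).
  replace ((fst p - fst q) ^ 2 + (snd p - snd q) ^ 2) with (d1 ^ 2 + d2 ^ 2) by (unfold d1, d2; ring).
  set (z := w1 * d1 + w2 * d2).
  destruct (Rle_dec z 0) as [H|H].
  - apply Rle_trans with 0; auto. apply sqrt_pos.
  - rewrite <- (sqrt_pow2 z) by lra. apply sqrt_le_1_alt.
    unfold z. assert (0 <= (w1 * d2 - w2 * d1) ^ 2) by apply pow2_ge_0.
    assert (0 <= d1 ^ 2 + d2 ^ 2) by (assert (0 <= d1^2) by apply pow2_ge_0; assert (0 <= d2^2) by apply pow2_ge_0; lra).
    nra.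
Qed.

Lemma cost_ge_lin P n w1 w2 : w1 ^ 2 + w2 ^ 2 <= 1 ->
  w1 * fst (P n) + w2 * snd (P n) - (w1 * fst (P 0%nat) + w2 * snd (P 0%nat)) <= cost P n.
Proof.
  intros Hw. induction n as [|n IH]; simpl.
  - lra.
  - assert (H := dist_ge_lin (P n) (P (S n)) w1 w2 Hw). lra.
Qed.

Lemma opt_lb_line a b x n P : TH a b -> (exists j, (j <= n)%nat /\ x j = -1) ->
  solution a x n P -> cos a <= cost P n.
Proof.
  intros HT [j [Hj Hxj]] [HP0 HS].
  destruct HT as [Hta [_ [_ [_ [_ [_ [Hsa [Hca [Heta [Ha2 _]]]]]]]]]].
  assert (Hw : (- cos a) ^ 2 + sin a ^ 2 <= 1) by lra.
  assert (H := cost_ge_lin P n _ _ Hw). rewrite HP0 in H; simpl fst in H; simpl snd in H.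
  destruct (HS n (le_n _)) as [Hv HF]. specialize (HF j Hj). rewrite Hxj in HF.
  apply Rabs_le_iff in HF.
  assert (fst (P n) + 1 <= snd (P n) * tan a) by lra.
  rewrite Heta in H0.
  assert (fst (P n) * cos a + cos a <= snd (P n) * sin a).
  { apply Rmult_le_compat_r with (r := cos a) in H0; [|lra].
    replace (snd (P n) * (sin a / cos a) * cos a) with (snd (P n) * sin a) in H0 by (field; lra). lra. }
  lra.
Qed.

Definition Nr a r := sqrt (1 + r ^ 2 + 2 * cos (2 * a) * r) / (2 * sin a).
Definition A1 (r : R) := (r - 1) / 2.
Definition A2 a r := (1 + r) / (2 * tan a).

Lemma Q_pos a b r : TH a b -> 0 < 1 + r ^ 2 + 2 * cos (2 * a) * r.
Proof.
  intros HT. destruct HT as [_ [_ [_ [_ [_ [_ [Hsa [Hca [_ [Ha2 Hc2]]]]]]]]]].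
  rewrite Hc2.
  replace (1 + r ^ 2 + 2 * (cos a ^ 2 - sin a ^ 2) * r) with
    ((r + (cos a ^ 2 - sin a ^ 2)) ^ 2 + (1 - (cos a ^ 2 - sin a ^ 2) ^ 2)) by ring.
  assert (0 <= (r + (cos a ^ 2 - sin a ^ 2)) ^ 2) by apply pow2_ge_0.
  replace (1 - (cos a ^ 2 - sin a ^ 2) ^ 2) with ((sin a ^ 2 + cos a ^ 2) ^ 2 - (cos a ^ 2 - sin a ^ 2) ^ 2) by (rewrite Ha2; ring).
  replace ((sin a ^ 2 + cos a ^ 2) ^ 2 - (cos a ^ 2 - sin a ^ 2) ^ 2) with (4 * (sin a * cos a) ^ 2) by ring.
  assert (0 < sin a * cos a) by nra. nra.
Qed.

Lemma Nr_pos a b r : TH a b -> 0 < Nr a r.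
Proof.
  intros HT. assert (HQ := Q_pos a b r HT). destruct HT as [_ [_ [_ [_ [_ [_ [Hsa _]]]]]]].
  unfold Nr. apply Rdiv_lt_0_compat; [apply sqrt_lt_R0; auto | lra].
Qed.

Lemma Nr_sq a b r : TH a b -> Nr a r ^ 2 = A1 r ^ 2 + A2 a r ^ 2.
Proof.
  intros HT. assert (HQ := Q_pos a b r HT).
  destruct HT as [Hta [_ [_ [_ [_ [_ [Hsa [Hca [Heta [Ha2 Hc2]]]]]]]]]].
  unfold Nr, A1, A2. rewrite Heta.
  replace ((sqrt (1 + r ^ 2 + 2 * cos (2 * a) * r) / (2 * sin a)) ^ 2) with
     ((sqrt (1 + r ^ 2 + 2 * cos (2 * a) * r)) ^ 2 / (4 * sin a ^ 2)) by (field; lra).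
  rewrite pow2_sqrt by lra. rewrite Hc2.
  replace (((1 + r) / (2 * (sin a / cos a))) ^ 2) with ((1 + r) ^ 2 * cos a ^ 2 / (4 * sin a ^ 2)) by (field; lra).
  apply Rmult_eq_reg_r with (4 * sin a ^ 2); [|nra].
  field_simplify; [|lra|lra].
  replace (cos a ^ 2) with (1 - sin a ^ 2) by lra. ring.
Qed.

Lemma opt_lb_apex a b x n r P : TH a b -> (exists j, (j <= n)%nat /\ x j = -1) ->
  (exists j, (j <= n)%nat /\ x j = r) -> 0 <= r <= 1 -> - cos (2 * a) <= r ->
  solution a x n P -> Nr a r <= cost P n.
Proof.
  intros HT [j [Hj Hxj]] [j' [Hj' Hxj']] Hr Hrc [HP0 HS].
  assert (HN := Nr_pos a b r HT). assert (HN2 := Nr_sq a b r HT).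
  destruct HT as [Hta [_ [_ [_ [_ [_ [Hsa [Hca [Heta [Ha2 Hc2]]]]]]]]]].
  set (N := Nr a r) in *.
  assert (Hw : (A1 r / N) ^ 2 + (A2 a r / N) ^ 2 <= 1).
  { right. replace ((A1 r / N) ^ 2 + (A2 a r / N) ^ 2) with ((A1 r ^ 2 + A2 a r ^ 2) / N ^ 2) by (field; lra).
    rewrite <- HN2. field. lra. }
  assert (H := cost_ge_lin P n _ _ Hw). rewrite HP0 in H; simpl fst in H; simpl snd in H.
  destruct (HS n (le_n _)) as [Hv HF].
  assert (HF1 := HF j Hj). assert (HF2 := HF j' Hj'). rewrite Hxj in HF1. rewrite Hxj' in HF2.
  apply Rabs_le_iff in HF1. apply Rabs_le_iff in HF2.
  set (u := fst (P n)) in *. set (v := snd (P n)) in *.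
  set (ta := tan a) in *.
  set (mu1 := (A2 a r / ta - A1 r) / 2).
  set (mu2 := (A2 a r / ta + A1 r) / 2).
  assert (Hm1 : 0 <= mu1).
  { unfold mu1, A1, A2; fold ta. replace ((1 + r) / (2 * ta) / ta) with ((1 + r) / (2 * ta * ta)) by (field; lra).
    assert (0 <= (1 + r) / (2 * ta * ta)) by (apply Rmult_le_pos; [lra| left; apply Rinv_0_lt_compat; nra]).
    lra. }
  assert (Hm2 : 0 <= mu2).
  { replace mu2 with ((r * (sin a ^ 2 + cos a ^ 2) + (cos a ^ 2 - sin a ^ 2)) * / (4 * sin a ^ 2)).
    2: { unfold mu2, A1, A2; fold ta. rewrite Heta. field. lra. }
    rewrite Ha2, <- Hc2. apply Rmult_le_pos; [lra|].
    left; apply Rinv_0_lt_compat; nra. }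
  assert (Hid : A1 r * u + A2 a r * v - (A1 r ^ 2 + A2 a r ^ 2) =
     mu1 * (v * ta - u - 1) + mu2 * (v * ta - r + u)).
  { unfold mu1, mu2, A1, A2; fold ta. field. lra. }
  assert (0 <= mu1 * (v * ta - u - 1)) by (apply Rmult_le_pos; lra).
  assert (0 <= mu2 * (v * ta - r + u)) by (apply Rmult_le_pos; lra).
  assert (Hge : N ^ 2 <= A1 r * u + A2 a r * v) by lra.
  apply Rle_trans with (A1 r / N * u + A2 a r / N * v - (A1 r / N * 0 + A2 a r / N * 0)); [|exact H].
  replace (A1 r / N * u + A2 a r / N * v - (A1 r / N * 0 + A2 a r / N * 0)) with ((A1 r * u + A2 a r * v) / N) by (field; lra).
  apply Rmult_le_reg_r with N; auto. replace ((A1 r * u + A2 a r * v) / N * N) with (A1 r * u + A2 a r * v) by (field; lra).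
  nra.
Qed.

Lemma f1_Nr a b r : TH a b ->
  f1 a b r * Nr a r = (1 + 2 * tan b / (tan a + tan b) * r) / (cos b * (tan a + tan b)).
Proof.
  intros HT. assert (HQ := Q_pos a b r HT).
  assert (HsQ := sqrt_lt_R0 _ HQ).
  destruct HT as [Hta [Htb0 [_ [Hcb [_ [_ [Hsa _]]]]]]].
  unfold f1, Nr. field. repeat split; lra.
Qed.

Lemma f1_line a b : TH a b ->
  f1 a b (- cos (2 * a)) * cos a =
  (1 + 2 * tan b / (tan a + tan b) * (- cos (2 * a))) / (cos b * (tan a + tan b)).
Proof.
  intros HT.
  destruct HT as [Hta [Htb0 [_ [Hcb [_ [_ [Hsa [Hca [_ [Ha2 Hc2]]]]]]]]]].
  assert (EQ : 1 + (- cos (2 * a)) ^ 2 + 2 * cos (2 * a) * (- cos (2 * a)) =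
           (2 * sin a * cos a) * (2 * sin a * cos a)).
  { rewrite Hc2. replace 1 with ((sin a ^ 2 + cos a ^ 2) ^ 2) at 1 by (rewrite Ha2; ring). ring. }
  unfold f1. rewrite EQ, sqrt_square by nra. field. repeat split; lra.
Qed.

Lemma ratio_le c o N Y : 0 <= c -> 0 < N -> N <= o -> c <= Y * N -> c / o <= Y.
Proof.
  intros Hc HN Ho H.
  assert (HY : 0 <= Y) by nra.
  apply Rmult_le_reg_r with o; [lra|].
  replace (c / o * o) with c by (field; lra). nra.
Qed.

Lemma exists_max (x : nat -> R) n : exists j, (j <= n)%nat /\ forall j', (j' <= n)%nat -> x j' <= x j.
Proof.
  induction n as [|n [j [Hj H]]].
  - exists 0%nat. split; auto. intros j' Hj'. assert (j' = 0%nat) by lia. subst; lra.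
  - destruct (Rle_dec (x (S n)) (x j)) as [Hle|Hlt].
    + exists j. split; [lia|]. intros j' Hj'. apply Nat.le_succ_r in Hj'. destruct Hj' as [Hj'|Hj'].
      * auto.
      * subst; auto.
    + exists (S n). split; auto. intros j' Hj'. apply Nat.le_succ_r in Hj'. destruct Hj' as [Hj'|Hj'].
      * specialize (H j' Hj'). lra.
      * subst; lra.
Qed.

Lemma apex_fc a b r (x : nat -> R) i : TH a b -> 0 <= r -> (forall j, -1 <= x j <= r) ->
  in_FC a x i (A1 r, A2 a r).
Proof.
  intros HT Hr Hx. destruct HT as [Hta _].
  assert (E : A2 a r * tan a = (1 + r) / 2) by (unfold A2; field; lra).
  split; simpl.
  - unfold A2. apply Rmult_le_pos; [lra| left; apply Rinv_0_lt_compat; lra].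
  - intros j _. rewrite E. apply Rabs_le_iff. specialize (Hx j). unfold A1. lra.
Qed.

Lemma dist_self p : dist p p = 0.
Proof. unfold dist. replace ((fst p - fst p) ^ 2 + (snd p - snd p) ^ 2) with 0 by ring. apply sqrt_0. Qed.

Lemma dist_apex a b r : TH a b -> dist (0, 0) (A1 r, A2 a r) = Nr a r.
Proof.
  intros HT. unfold dist; cbn [fst snd].
  replace ((0 - A1 r) ^ 2 + (0 - A2 a r) ^ 2) with (A1 r ^ 2 + A2 a r ^ 2) by ring.
  rewrite <- (Nr_sq a b r HT). apply sqrt_pow2. left; apply (Nr_pos a b r HT).
Qed.

Definition xpos (r : R) (j : nat) : R := match j with 0%nat => 0 | 1%nat => r | _ => -1 end.
Definition s1pos a b r := s0R a b (xpos r) 0 (0, 0).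
Definition u1pos a b r := 0 + s1pos a b r * (1 * sin b).
Definition v1pos a b r := 0 + s1pos a b r * cos b.
Definition s2pos a b r := s0L a b (xpos r) 1 (u1pos a b r, v1pos a b r).
Definition Ppos a b r (j : nat) : pt := match j with
  | 0%nat => (0, 0)
  | 1%nat => (u1pos a b r, v1pos a b r)
  | _ => (u1pos a b r + s2pos a b r * (-1 * sin b), v1pos a b r + s2pos a b r * cos b) end.
Definition Sapex a r (j : nat) : pt := match j with 0%nat => (0, 0) | _ => (A1 r, A2 a r) end.

Lemma fc0 a (x : nat -> R) : x 0%nat = 0 -> in_FC a x 0 (0, 0).
Proof.
  intros H. split; simpl; [lra|]. intros j Hj. assert (j = 0%nat) by lia. subst.
  rewrite H, Rminus_0_r, Rabs_R0. lra.
Qed.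

Lemma construct_pos a b r : TH a b -> 0 < r <= 1 -> - cos (2 * a) <= r ->
  hedge_ratios a b (f1 a b r).
Proof.
  intros HT Hr Hrc.
  assert (HT' := HT). destruct HT' as [Hta [Htb0 [Htb [Hcb [Hsb [Hb2 _]]]]]].
  set (K := cos b * (tan a + tan b)).
  assert (HK : 0 < K) by (unfold K; apply Rmult_lt_0_compat; lra).
  assert (Hs1 : s1pos a b r = r / K).
  { unfold s1pos, s0R; simpl. fold K. replace (r - 0 - 0 * tan a) with r by ring. apply Rmax_right.
    unfold Rdiv. assert (0 < / K) by (apply Rinv_0_lt_compat; lra). nra. }
  assert (Hnum : 0 <= 1 + r * (tan b - tan a) / (tan a + tan b)).
  { assert (r * (tan b - tan a) / (tan a + tan b) >= - 1); [|lra].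
    apply Rle_ge. apply Rmult_le_reg_r with (tan a + tan b); [lra|].
    replace (r * (tan b - tan a) / (tan a + tan b) * (tan a + tan b)) with (r * (tan b - tan a)) by (field; lra).
    nra. }
  assert (Hs2 : s2pos a b r = (1 + r * (tan b - tan a) / (tan a + tan b)) / K).
  { unfold s2pos, s0L, u1pos, v1pos; simpl. fold K. rewrite Hs1.
    replace (0 + r / K * (1 * sin b) - -1 - (0 + r / K * cos b) * tan a) with
       (1 + r * (tan b - tan a) / (tan a + tan b)) by (unfold K; rewrite Hsb; field; lra).
    apply Rmax_right. apply Rmult_le_pos; [|left; apply Rinv_0_lt_compat; lra].
    assert (r * (tan b - tan a) / (tan a + tan b) >= - 1); [|lra].
    apply Rle_ge. apply Rmult_le_reg_r with (tan a + tan b); [lra|].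
    replace (r * (tan b - tan a) / (tan a + tan b) * (tan a + tan b)) with (r * (tan b - tan a)) by (field; lra).
    nra. }
  assert (Hgood : good (xpos r) 2).
  { split; [lia|]. split; [reflexivity|]. split.
    - intros i Hi. destruct i as [|[|i]]; [| |lia].
      + intros [_ [j [Hj H]]]. assert (j = 0%nat) by lia. subst. simpl in H. lra.
      + intros [[j [Hj H]] _]. destruct j as [|[|j]]; [| |lia]; simpl in H; lra.
    - split; split.
      + exists 2%nat. split; auto.
      + intros j _. destruct j as [|[|j]]; simpl; lra.
      + exists 0%nat. split; [lia|]. simpl; lra.
      + intros j _. destruct j as [|[|j]]; simpl; lra. }
  assert (Hx : forall j, -1 <= xpos r j <= r) by (intros [|[|j]]; simpl; lra).
  exists (xpos r), 2%nat, (Ppos a b r), (Nr a r).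
  split; [exact Hgood|]. split; [|split].
  - split; [reflexivity|]. intros i Hi. destruct i as [|[|i]]; [| |lia].
    + simpl. apply (proj2 (step_right a b (xpos r) 0 0 0 _ HT (fc0 a _ eq_refl)
         ltac:(intros j Hj; assert (j = 0%nat) by lia; subst; simpl; lra) ltac:(simpl; lra))).
      reflexivity.
    + assert (Hin : in_FC a (xpos r) 1 (u1pos a b r, v1pos a b r)).
      { change (in_FC a (xpos r) (S 0) (Ppos a b r 1)).
        apply hedge_step_fc with (b := b) (p := Ppos a b r 0).
        simpl. apply (proj2 (step_right a b (xpos r) 0 0 0 _ HT (fc0 a _ eq_refl)
         ltac:(intros j Hj; assert (j = 0%nat) by lia; subst; simpl; lra) ltac:(simpl; lra))).
        reflexivity. }
      simpl. apply (proj2 (step_left a b (xpos r) 1 _ _ _ HT Hin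
         ltac:(intros j Hj; destruct j as [|[|j]]; [| |lia]; simpl; lra) ltac:(simpl; lra))).
      reflexivity.
  - split.
    + intros P HP. apply (opt_lb_apex a b (xpos r) 2 r P HT); auto; try lra.
      * exists 2%nat; split; auto.
      * exists 1%nat; split; auto.
    + intros m Hm. specialize (Hm (Sapex a r)).
      assert (HS : solution a (xpos r) 2 (Sapex a r)).
      { split; [reflexivity|]. intros i Hi. destruct i as [|i].
        - apply fc0; reflexivity.
        - apply apex_fc with (b := b); auto; lra. }
      specialize (Hm HS). simpl in Hm. rewrite (dist_apex a b r HT), dist_self in Hm. lra.
  - simpl. replace (dist (0, 0) (u1pos a b r, v1pos a b r)) with (s1pos a b r).
    2: { unfold u1pos, v1pos. rewrite dist_ray; auto. rewrite Hs1. unfold Rdiv. left; apply Rmult_lt_0_compat; [lra|apply Rinv_0_lt_compat; lra].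
         nra. }
    rewrite dist_ray.
    3: nra.
    2: { rewrite Hs2. apply Rmult_le_pos; [|left; apply Rinv_0_lt_compat; lra].
         exact Hnum. }
    rewrite Hs1, Hs2. assert (HN := Nr_pos a b r HT).
    apply Rmult_eq_reg_r with (Nr a r); [|lra]. rewrite (f1_Nr a b r HT).
    replace ((0 + r / K + (1 + r * (tan b - tan a) / (tan a + tan b)) / K) / Nr a r * Nr a r)
      with (0 + r / K + (1 + r * (tan b - tan a) / (tan a + tan b)) / K) by (field; lra).
    unfold K. field. lra.
Qed.

Definition xz (j : nat) : R := match j with 0%nat => 0 | _ => -1 end.
Definition sz a b := s0L a b xz 0 (0, 0).
Definition Pz a b (j : nat) : pt := match j with
  | 0%nat => (0, 0)
  | _ => (0 + sz a b * (-1 * sin b), 0 + sz a b * cos b) end.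

Lemma construct_zero a b : TH a b -> - cos (2 * a) <= 0 ->
  hedge_ratios a b (f1 a b 0).
Proof.
  intros HT Hrc.
  assert (HT' := HT). destruct HT' as [Hta [Htb0 [Htb [Hcb [Hsb [Hb2 _]]]]]].
  set (K := cos b * (tan a + tan b)).
  assert (HK : 0 < K) by (unfold K; apply Rmult_lt_0_compat; lra).
  assert (Hs : sz a b = 1 / K).
  { unfold sz, s0L; simpl. fold K. replace (0 - -1 - 0 * tan a) with 1 by ring. apply Rmax_right.
    unfold Rdiv. assert (0 < / K) by (apply Rinv_0_lt_compat; lra). nra. }
  assert (Hgood : good xz 1).
  { split; [lia|]. split; [reflexivity|]. split.
    - intros i Hi. destruct i as [|i]; [|lia].
      intros [[j [Hj H]] _]. assert (j = 0%nat) by lia. subst. simpl in H. lra.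
    - split; split.
      + exists 1%nat. split; auto.
      + intros j _. destruct j as [|j]; simpl; lra.
      + exists 0%nat. split; [lia|]. simpl; lra.
      + intros j _. destruct j as [|j]; simpl; lra. }
  assert (Hx : forall j, -1 <= xz j <= 0) by (intros [|j]; simpl; lra).
  exists xz, 1%nat, (Pz a b), (Nr a 0).
  split; [exact Hgood|]. split; [|split].
  - split; [reflexivity|]. intros i Hi. destruct i as [|i]; [|lia].
    simpl. apply (proj2 (step_left a b xz 0 0 0 _ HT (fc0 a _ eq_refl)
         ltac:(intros j Hj; assert (j = 0%nat) by lia; subst; simpl; lra) ltac:(simpl; lra))).
    reflexivity.
  - split.
    + intros P HP. apply (opt_lb_apex a b xz 1 0 P HT); auto; try lra.
      * exists 1%nat; split; auto.
      * exists 0%nat; split; auto.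
    + intros m Hm. specialize (Hm (Sapex a 0)).
      assert (HS : solution a xz 1 (Sapex a 0)).
      { split; [reflexivity|]. intros i Hi. destruct i as [|i].
        - apply fc0; reflexivity.
        - apply apex_fc with (b := b); auto; lra. }
      specialize (Hm HS). simpl in Hm. rewrite (dist_apex a b 0 HT) in Hm. lra.
  - simpl. rewrite dist_ray.
    3: nra.
    2: { rewrite Hs. unfold Rdiv. left; apply Rmult_lt_0_compat; [lra|apply Rinv_0_lt_compat; lra]. }
    rewrite Hs. assert (HN := Nr_pos a b 0 HT).
    apply Rmult_eq_reg_r with (Nr a 0); [|lra]. rewrite (f1_Nr a b 0 HT).
    replace ((0 + 1 / K) / Nr a 0 * Nr a 0) with (1 / K) by (field; lra).
    unfold K. field. lra.
Qed.

Theorem lemma5 (a b : R) (ha : 0 < a < PI / 2) (hb : 0 <= b <= a) :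
  exists M : R,
    (exists r, Rmax 0 (- cos (2 * a)) <= r <= 1 /\ M = f1 a b r) /\
    (forall r, Rmax 0 (- cos (2 * a)) <= r <= 1 -> f1 a b r <= M) /\
    is_lub (hedge_ratios a b) M.
Proof.
  assert (HT := TH_ok a b ha hb).
  assert (HT' := HT).
  destruct HT' as [Hta [Htb0 [Htb [Hcb [Hsb [Hb2 [Hsa [Hca [Heta [Ha2 Hc2]]]]]]]]]].
  assert (Hc2b : -1 <= cos (2 * a) <= 1) by (rewrite Hc2; nra).
  set (r0 := Rmax 0 (- cos (2 * a))).
  assert (Hr0 : r0 <= 1) by (apply Rmax_lub; lra).
  assert (Hr00 : 0 <= r0) by apply Rmax_l.
  assert (Hr0c : - cos (2 * a) <= r0) by apply Rmax_r.
  assert (Hcont : continuity (fun r => 2 * sin a / (cos b * (tan a + tan b)) *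
     ((1 + 2 * tan b / (tan a + tan b) * r) / sqrt (1 + r ^ 2 + 2 * cos (2 * a) * r)))).
  { reg.
    - left; apply (Q_pos a b x HT).
    - intros y. apply Rgt_not_eq, sqrt_lt_R0, (Q_pos a b y HT). }
  destruct (continuity_ab_maj (f1 a b) r0 1 Hr0 (fun c _ => Hcont c)) as [rm [Hmax Hrm]].
  exists (f1 a b rm). split; [exists rm; split; auto|]. split; [exact Hmax|].
  set (k := 2 * tan b / (tan a + tan b)).
  assert (Hk : k * (tan a + tan b) = 2 * tan b) by (unfold k; field; lra).
  assert (Hk0 : 0 <= k).
  { unfold k, Rdiv. assert (0 < / (tan a + tan b)) by (apply Rinv_0_lt_compat; lra). nra. }
  assert (Hk1 : k <= 1).
  { apply Rmult_le_reg_r with (tan a + tan b); [lra|]. rewrite Hk. lra. }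
  split.
  - intros q [x [n [P [o [Hg [Hr [Ho Hq]]]]]]].
    destruct (run_inv a b x n P HT Hg Hr n (le_n _)) as [HF [Hc [HD [HE HB]]]].
    fold k in HB.
    destruct (exists_max x n) as [jm [Hjm Hmx]].
    set (rho := x jm) in *.
    destruct Hg as [_ [Hx0 [_ [[Hmin Hmin'] [_ Hmax1]]]]].
    assert (Hrho0 : 0 <= rho) by (rewrite <- Hx0; apply Hmx; lia).
    assert (Hrho1 : rho <= 1) by (apply Hmax1; auto).
    destruct (HB 1 rho (fun j Hj => conj (Hmin' j Hj) (Hmx j Hj))) as [_ [_ Hv]].
    assert (Hv' : (tan a + tan b) * snd (P n) <= 1 + k * rho).
    { apply Rle_trans with (1 := Hv). apply Rmax_lub; nra. }
    destruct HF as [Hv0 _].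
    assert (Hcost : cost P n = snd (P n) / cos b) by (rewrite <- Hc; field; lra).
    assert (Hc0 : 0 <= cost P n).
    { rewrite Hcost. unfold Rdiv. assert (0 < / cos b) by (apply Rinv_0_lt_compat; lra). nra. }
    assert (Hcb2 : cost P n <= (1 + k * rho) / (cos b * (tan a + tan b))).
    { rewrite Hcost. apply Rmult_le_reg_r with (cos b * (tan a + tan b)); [nra|].
      replace (snd (P n) / cos b * (cos b * (tan a + tan b))) with ((tan a + tan b) * snd (P n)) by (field; lra).
      replace ((1 + k * rho) / (cos b * (tan a + tan b)) * (cos b * (tan a + tan b))) with (1 + k * rho) by (field; nra).
      exact Hv'. }
    destruct Ho as [_ Hglb].
    rewrite Hq.
    destruct (Rle_dec (- cos (2 * a)) rho) as [Hap|Hln].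
    + assert (HN := Nr_pos a b rho HT).
      assert (HNo : Nr a rho <= o).
      { apply Hglb. intros P' HP'. apply (opt_lb_apex a b x n rho P' HT); auto.
        exists jm; auto. }
      apply Rle_trans with (f1 a b rho).
      * apply ratio_le with (Nr a rho); auto. rewrite (f1_Nr a b rho HT). exact Hcb2.
      * apply Hmax. split; [apply Rmax_lub; lra|lra].
    + assert (HNo : cos a <= o).
      { apply Hglb. intros P' HP'. apply (opt_lb_line a b x n P' HT); auto. }
      assert (Er0 : r0 = - cos (2 * a)) by (apply Rmax_right; lra).
      apply Rle_trans with (f1 a b (- cos (2 * a))).
      * apply ratio_le with (cos a); auto. rewrite (f1_line a b HT). fold k.
        apply Rle_trans with (1 := Hcb2).
        apply Rmult_le_compat_r; [left; apply Rinv_0_lt_compat; nra|]. nra.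
      * apply Hmax. lra.
  - intros m Hm. apply Hm.
    destruct (Rle_lt_or_eq_dec 0 rm ltac:(lra)) as [Hp|Hz].
    + apply construct_pos; auto; lra.
    + rewrite <- Hz. apply construct_zero; auto; lra.
Qed.
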